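(* Let $\mathbf{A}\in\mathbb{R}^{M\times N}$, $\mathbf{Y}\in\mathbb{R}^{M\times L}$, and let $(\mathbf{g}(t),\mathbf{V}(t))$, $t\ge0$, evolve under the continuous gradient flow of $\mathcal{L}(\mathbf{g},\mathbf{V})=\Vert\mathbf{Y}-\mathbf{A}((\mathbf{g}^{\odot 2}\mathbf{1}_L)\odot\mathbf{V})\Vert_F^2$. Let $\mathbf{X}(t)=(\mathbf{g}(t)^{\odot 2}\mathbf{1}_L)\odot\mathbf{V}(t)$ and $\boldsymbol{\Lambda}(t)=\mathbf{A}^\top(\mathbf{Y}-\mathbf{A}\mathbf{X}(t))$. Then for every row $l\in[N]$ and every $t\ge0$, $$\frac12\frac{d}{dt}g_l^2(t)=\sum_{j\in[L]}\frac{d}{dt}V_{lj}^2(t)=4\sum_{j\in[L]}(\boldsymbol{\Lambda}(t)\odot\mathbf{X}(t))_{lj}=4\left(\boldsymbol{\Lambda}(t)\mathbf{X}(t)^\top\right)_{ll}.$$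
   Context: $\odot$ is the entrywise product and $\mathbf{1}_L$ the $1\times L$ all-ones row vector, so $X_{ij}=g_i^2V_{ij}$. Gradient flow: $\frac{d}{dt}g_l=-\partial\mathcal{L}/\partial g_l$, $\frac{d}{dt}V_{lm}=-\partial\mathcal{L}/\partial V_{lm}$ along the curve. *)

(* Defs.v *)
From HB Require Import structures.
From mathcomp Require Import all_boot all_order all_algebra.
From mathcomp Require Import all_classical all_reals.
From mathcomp Require Import topology normedtype derive.
Set Implicit Arguments. Unset Strict Implicit. Unset Printing Implicit Defensive.
Import Order.TTheory GRing.Theory Num.Theory.
Import numFieldNormedType.Exports.
Local Open Scope ring_scope.

Definition hadamard (R : pzRingType) m n (A B : 'M[R]_(m, n)) : 'M[R]_(m, n) :=
  map2_mx (fun a b => a * b) A B.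

Definition esq (R : pzRingType) m n (A : 'M[R]_(m, n)) : 'M[R]_(m, n) :=
  map_mx (fun a => a ^+ 2) A.

Definition ones_row (R : pzRingType) L : 'rV[R]_L := const_mx 1.

Definition Xmat (R : pzRingType) N L (g : 'cV[R]_N) (V : 'M[R]_(N, L)) : 'M[R]_(N, L) :=
  hadamard (esq g *m ones_row R L) V.

Definition frob2 (R : pzRingType) m n (B : 'M[R]_(m, n)) : R :=
  \sum_(i < m) \sum_(j < n) (B i j) ^+ 2.

Definition loss (R : pzRingType) M N L (A : 'M[R]_(M, N)) (Y : 'M[R]_(M, L))
  (g : 'cV[R]_N) (V : 'M[R]_(N, L)) : R :=
  frob2 (Y - A *m Xmat g V).

Definition dloss_dg (R : realType) M N L (A : 'M[R]_(M, N)) (Y : 'M[R]_(M, L))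
  (g : 'cV[R]_N) (V : 'M[R]_(N, L)) (l : 'I_N) : R :=
  derive1 (fun s : R => loss A Y (\col_i (if i == l then s else g i 0)) V) (g l 0).

Definition dloss_dV (R : realType) M N L (A : 'M[R]_(M, N)) (Y : 'M[R]_(M, L))
  (g : 'cV[R]_N) (V : 'M[R]_(N, L)) (l : 'I_N) (m : 'I_L) : R :=
  derive1 (fun s : R => loss A Y g
     (\matrix_(i, j) (if (i == l) && (j == m) then s else V i j))) (V l m).

Definition gradient_flow (R : realType) M N L (A : 'M[R]_(M, N)) (Y : 'M[R]_(M, L))
  (g : R -> 'cV[R]_N) (V : R -> 'M[R]_(N, L)) : Prop :=
  forall t : R, 0 <= t ->
    (forall l : 'I_N,
       is_derive t (1 : R) (fun s => g s l 0) (- dloss_dg A Y (g t) (V t) l)) /\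
    (forall (l : 'I_N) (m : 'I_L),
       is_derive t (1 : R) (fun s => V s l m) (- dloss_dV A Y (g t) (V t) l m)).

(* Main.v *)
Require Import Defs.
From HB Require Import structures.
From mathcomp Require Import all_boot all_order all_algebra.
From mathcomp Require Import all_classical all_reals.
From mathcomp Require Import topology normedtype derive.
From mathcomp Require Import ring.
Import Order.TTheory GRing.Theory Num.Theory.
Import numFieldNormedType.Exports.
Local Open Scope ring_scope.

Section H.
Variable R : realType.
Implicit Types (f h : R -> R) (x c df dh : R).

Lemma dcst x c : is_derive x (1:R) (fun _ : R => c) 0.
Proof. exact: is_derive_cst. Qed.
Lemma did x : is_derive x (1:R) (fun s : R => s) 1.
Proof. exact: is_derive_id. Qed.
Lemma deq f x df df' : is_derive x (1:R) f df -> df = df' -> is_derive x (1:R) f df'.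
Proof. by move=> H <-. Qed.
Lemma dadd f h x df dh : is_derive x (1:R) f df -> is_derive x (1:R) h dh ->
  is_derive x (1:R) (fun s => f s + h s) (df + dh).
Proof. move=> H1 H2; exact: is_deriveD. Qed.
Lemma dsub f h x df dh : is_derive x (1:R) f df -> is_derive x (1:R) h dh ->
  is_derive x (1:R) (fun s => f s - h s) (df - dh).
Proof. move=> H1 H2; exact: is_deriveB. Qed.
Lemma dmul f h x df dh : is_derive x (1:R) f df -> is_derive x (1:R) h dh ->
  is_derive x (1:R) (fun s => f s * h s) (f x * dh + h x * df).
Proof. move=> H1 H2; exact: is_deriveM. Qed.
Arguments dmul {f h x df dh}.
Lemma dsq f x df : is_derive x (1:R) f df ->
  is_derive x (1:R) (fun s => f s ^+ 2) (2 * f x * df).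
Proof.
move=> H1; have H := dmul H1 H1.
have -> : (fun s => f s ^+ 2) = (fun s => f s * f s) by apply: funext => s; rewrite expr2.
have -> : 2 * f x * df = f x * df + f x * df by ring.
exact: H.
Qed.
Arguments dsq {f x df}.
Lemma dsum n (F : 'I_n -> R -> R) x (dF : 'I_n -> R) :
  (forall i, is_derive x (1:R) (F i) (dF i)) ->
  is_derive x (1:R) (fun s => \sum_(i < n) F i s) (\sum_(i < n) dF i).
Proof.
move=> H; have := is_derive_sum H.
by have -> : (\sum_(i < n) F i) = (fun s => \sum_(i < n) F i s) by apply: funext => s; rewrite fct_sumE.
Qed.
Lemma d1 f x df : is_derive x (1:R) f df -> derive1 f x = df.
Proof. by move=> H; rewrite derive1E derive_val. Qed.

Lemma dloss M N L (A : 'M[R]_(M, N)) (Y : 'M[R]_(M, L)) (F : R -> 'M[R]_(N, L))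
  (dF : 'M[R]_(N, L)) x :
  (forall k j, is_derive x (1:R) (fun s => F s k j) (dF k j)) ->
  is_derive x (1:R) (fun s => frob2 (Y - A *m F s))
    (-2 * \sum_(k < N) \sum_(j < L) (A^T *m (Y - A *m F x)) k j * dF k j).
Proof.
move=> H; rewrite /frob2.
have E : forall i j, is_derive x (1:R) (fun s => (Y - A *m F s) i j)
   (0 - \sum_k (A i k * dF k j + F x k j * 0)).
  move=> i j.
  have -> : (fun s => (Y - A *m F s) i j) = (fun s => Y i j - \sum_k A i k * F s k j).
    by apply: funext => s; rewrite !mxE.
  apply: (@dsub (fun _ => Y i j) (fun s => \sum_k A i k * F s k j)).
  apply: dsum => k; exact: (@dmul (fun _ => A i k) (fun s => F s k j) x 0 (dF k j) (dcst x (A i k)) (H k j)).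
have := @dsum _ _ _ _ (fun i => @dsum _ _ _ _ (fun j => @dsq _ _ _ (E i j))).
set D := (X in is_derive _ _ _ X -> _).
suff -> : D = (-2 * \sum_(k < N) \sum_(j < L) (A^T *m (Y - A *m F x)) k j * dF k j) by [].
rewrite /D.
have Hx : forall i j, 2 * (Y - A *m F x) i j * (0 - \sum_k (A i k * dF k j + F x k j * 0))
   = \sum_k (-2 * (A i k * (Y - A *m F x) i j * dF k j)).
  move=> i j; rewrite sub0r mulrN -mulNr mulr_sumr; apply: eq_bigr => k _; ring.
under eq_bigr => i _ do under eq_bigr => j _ do rewrite Hx.
rewrite [RHS]mulr_sumr; under [RHS]eq_bigr do rewrite mulr_sumr.
under eq_bigr do rewrite exchange_big.
rewrite exchange_big /=; apply: eq_bigr => k _.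
rewrite exchange_big /=; apply: eq_bigr => j _.
rewrite !mxE mulr_suml mulr_sumr; apply: eq_bigr => i _.
rewrite !mxE; ring.
Qed.

Lemma Xmat_entry N L (G : 'cV[R]_N) (W : 'M[R]_(N, L)) k j :
  Xmat G W k j = G k 0 ^+ 2 * W k j.
Proof. by rewrite /Xmat /hadamard !mxE big_ord1 !mxE mulr1. Qed.

Lemma dg_val M N L (A : 'M[R]_(M, N)) (Y : 'M[R]_(M, L)) (G : 'cV[R]_N) (W : 'M[R]_(N, L)) l :
  dloss_dg A Y G W l = -4 * G l 0 * \sum_(j < L) (A^T *m (Y - A *m Xmat G W)) l j * W l j.
Proof.
rewrite /dloss_dg /loss; apply: d1.
set F := fun s => Xmat (\col_i (if i == l then s else G i 0)) W.
have HF : forall k j, is_derive (G l 0) (1:R) (fun s => F s k j)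
   ((\matrix_(k, j) (if k == l then 2 * G l 0 * W l j else 0) : 'M[R]_(N, L)) k j).
  move=> k j; rewrite /F mxE.
  under eq_fun do rewrite Xmat_entry mxE.
  case: eqP => [->|_].
    have := dmul (dsq (did (G l 0))) (dcst (G l 0) (W l j)).
    by rewrite mulr0 add0r mulr1 mulrC.
  exact: dcst.
have := @dloss _ _ _ A Y _ _ _ HF.
have -> : F (G l 0) = Xmat G W.
  rewrite /F; congr Xmat; apply/matrixP => i j; rewrite !mxE ord1.
  by case: eqP => [->|].
set D := (X in is_derive _ _ _ X -> _) => HD.
suff <- : D = -4 * G l 0 * \sum_(j < L) (A^T *m (Y - A *m Xmat G W)) l j * W l j by [].
rewrite /D (bigD1 l) //= [X in _ + X]big1 ?addr0; last first.
  by move=> k kl; apply: big1 => j _; rewrite mxE (negbTE kl) mulr0.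
under eq_bigr do rewrite mxE eqxx.
rewrite mulr_sumr mulr_sumr; apply: eq_bigr => j _; ring.
Qed.

Lemma dV_val M N L (A : 'M[R]_(M, N)) (Y : 'M[R]_(M, L)) (G : 'cV[R]_N) (W : 'M[R]_(N, L)) l m :
  dloss_dV A Y G W l m = -2 * G l 0 ^+ 2 * (A^T *m (Y - A *m Xmat G W)) l m.
Proof.
rewrite /dloss_dV /loss; apply: d1.
set F := fun s => Xmat G (\matrix_(i, j) (if (i == l) && (j == m) then s else W i j)).
have HF : forall k j, is_derive (W l m) (1:R) (fun s => F s k j)
   ((\matrix_(k, j) (if (k == l) && (j == m) then G l 0 ^+ 2 else 0) : 'M[R]_(N, L)) k j).
  move=> k j; rewrite /F mxE.
  under eq_fun do rewrite Xmat_entry mxE.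
  case: (k =P l) => [->|_] /=; last exact: dcst.
  case: (j =P m) => [_|_] /=; last exact: dcst.
  have := dmul (dcst (W l m) (G l 0 ^+ 2)) (did (W l m)).
  by rewrite mulr0 addr0 mulr1.
have := @dloss _ _ _ A Y _ _ _ HF.
have -> : F (W l m) = Xmat G W.
  rewrite /F; congr Xmat; apply/matrixP => i j; rewrite !mxE.
  by case: eqP => [->|] //=; case: eqP => [->|].
set D := (X in is_derive _ _ _ X -> _) => HD.
suff <- : D = -2 * G l 0 ^+ 2 * (A^T *m (Y - A *m Xmat G W)) l m by [].
rewrite /D (bigD1 l) //= [X in _ + X]big1 ?addr0; last first.
  by move=> k kl; apply: big1 => j _; rewrite mxE (negbTE kl) mulr0.
rewrite (bigD1 m) //= [X in _ + X]big1 ?addr0; last first.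
  by move=> j /negbTE jm; rewrite mxE jm andbF mulr0.
rewrite mxE !eqxx /=; ring.
Qed.
End H.
Arguments d1 {R f x df}.
Arguments dsq {R f x df}.

Theorem lemmaB2 (R : realType) (M N L : nat)
  (A : 'M[R]_(M, N)) (Y : 'M[R]_(M, L))
  (g : R -> 'cV[R]_N) (V : R -> 'M[R]_(N, L)) :
  gradient_flow A Y g V ->
  let X := fun t => Xmat (g t) (V t) in
  let Lam := fun t => A^T *m (Y - A *m X t) in
  forall (l : 'I_N) (t : R), 0 <= t ->
    [/\ 2^-1 * derive1 (fun s => (g s l 0) ^+ 2) t
          = \sum_(j < L) derive1 (fun s => (V s l j) ^+ 2) t,
        \sum_(j < L) derive1 (fun s => (V s l j) ^+ 2) t
          = 4 * \sum_(j < L) (hadamard (Lam t) (X t)) l j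
      & 4 * \sum_(j < L) (hadamard (Lam t) (X t)) l j
          = 4 * (Lam t *m (X t)^T) l l].
Proof.
move=> Hf X Lam l t ht.
have [Hg HV] := Hf t ht.
have E1 : derive1 (fun s => (g s l 0) ^+ 2) t
    = 8 * \sum_(j < L) Lam t l j * X t l j.
  rewrite (d1 (dsq (Hg l))) dg_val.
  rewrite (_ : forall c s : R, 2 * c * - (-4 * c * s) = 8 * (c ^+ 2 * s)); last by move=> c s; ring.
  congr (_ * _); rewrite mulr_sumr.
  apply: eq_bigr => j _; rewrite /X Xmat_entry /Lam /X; ring.
have E2 : forall j, derive1 (fun s => (V s l j) ^+ 2) t = 4 * (Lam t l j * X t l j).
  move=> j; rewrite (d1 (dsq (HV l j))) dV_val /X Xmat_entry /Lam /X; ring.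
have E3 : \sum_(j < L) (hadamard (Lam t) (X t)) l j = \sum_(j < L) Lam t l j * X t l j.
  by apply: eq_bigr => j _; rewrite /hadamard mxE.
split.
- rewrite E1 (eq_bigr _ (fun j _ => E2 j)) -mulr_sumr mulrA; congr (_ * _).
  have h2 : (2:R) != 0 by rewrite pnatr_eq0.
  by field.
- by rewrite (eq_bigr _ (fun j _ => E2 j)) -mulr_sumr E3.
- by rewrite E3 !mxE; congr (_ * _); apply: eq_bigr => j _; rewrite !mxE.
Qed.
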